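(* Let $T^*_1,\dots,T^*_n$ be a sequence of releases of a dynamic dataset $T$ that is $m$-Distinct. Let $t$ be any record of $T$, with versions $t'_1,\dots,t'_I$ in these releases. Then in the feasible sub-SUG of $t$ built from these $I$ versions, every layer satisfies $|V'_i|\ge m$ for $i=1,\dots,I$.
   Context: Data model. A microdata table $T$ is published repeatedly as generalized tables $T^*_1,T^*_2,\dots$. Its records carry an identifier, quasi-identifier (QI) attributes and a sensitive attribute $S$ with a finite domain $\mathrm{dom}(S)$. Each published table partitions its records, possibly including counterfeit records, into QI-groups. If a record $t$ appears in a release, its candidate sensitive set in that release is the set of sensitive values occurring in its QI-group; this set contains $t$'s actual sensitive value. The versions of $t$ are its records in the successive releases in which it appears, listed in order: $t'_1,\dots,t'_I$, with candidate sensitive sets $C_1,\dots,C_I$. Internal updates are governed by a publicly known transition probability $P_{trans}(a,b)\ge 0$ for $a,b\in\mathrm{dom}(S)$. Sensitive attribute update graph (SUG). The SUG of $t$ has, for each $i=1,\dots,I$, a layer $V_i=\{v_{i,s}: s\in C_i\}$ with one node per value of $C_i$. There is a directed edge $(v_{i,s},v_{i+1,s'})$ exactly when $P_{trans}(s,s')>0$. Nodes and edges carry positive weights, which do not affect the feasible sub-SUG. Feasible sub-SUG. Obtain it from the SUG by repeatedly deleting a node, together with its incident edges, until no node can be deleted. A node is deleted if any of the following holds: it lies in $V_1$ and has no outgoing edge; it lies in $V_I$ and has no incoming edge; it lies in $V_i$ with $1<i<I$ and lacks an incoming edge or lacks an outgoing edge. When $I=1$, no node is deleted. Denote the remaining layers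 by $V'_i$. Definitions for $m$-Distinct. - For $a\in\mathrm{dom}(S)$, the candidate update set is $CUS(a)=\{b\in\mathrm{dom}(S): P_{trans}(a,b)>0\}$. - For a QI-group $g$ whose records have sensitive values $s_1,\dots,s_k$, its update set signature is the multiset $USS(g)=\{CUS(s_1),\dots,CUS(s_k)\}$. For a record version $t_i$, $USS(t_i)$ is the update set signature of the QI-group containing $t_i$. - A set of sensitive values $S'$ is a legal update instance of a multiset $U=\{U_1,\dots,U_k\}$ of subsets of $\mathrm{dom}(S)$ if all three of the following hold: $|S'|=k$; every $s\in S'$ lies in some $U_j$; every $U_j$ contains some $s\in S'$. - A published table is $m$-unique if every QI-group contains at least $m$ records, all with distinct sensitive values. The releases $T^*_1,\dots,T^*_n$ are $m$-Distinct if both of the following hold: 1. Each $T^*_i$ is $m$-unique. 2. Take any record $t$ and any two releases $T_i,T_j$ with $i<j$ that both contain $t$ and such that no release strictly between them contains $t$. Then the candidate sensitive set of $t_j$ is a legal update instance of $USS(t_i)$. *)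

(* Defs.v *)
From HB Require Import structures.
From mathcomp Require Import all_boot all_order all_algebra.
Set Implicit Arguments. Unset Strict Implicit. Unset Printing Implicit Defensive.
Import Order.TTheory GRing.Theory Num.Theory.

(* Rec : all record identifiers (records of T and counterfeit ones).   *)
(* S   : the finite domain dom(S) of the sensitive attribute.          *)
(* G   : labels of QI-groups.                                          *)
(* A published table: the set of records it contains, the sensitive    *)
(* value of each record in it, and the QI-group label of each record;  *)
(* records with the same label form one QI-group (a partition).        *)
Record release (Rec S : finType) (G : eqType) := Release {
  present : {set Rec};
  sval : Rec -> S;
  grp : Rec -> G
}.

Section Model.
Variables (Rec S : finType) (G : eqType).
Implicit Types (rel : release Rec S G) (r : Rec).

Definition qi_group rel r : {set Rec} :=
  [set r' in present rel | grp rel r' == grp rel r].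

Definition cand_set rel r : {set S} :=
  [set sval rel r' | r' in qi_group rel r].

Definition m_unique (m : nat) rel : Prop :=
  forall r, r \in present rel ->
    m <= #|qi_group rel r| /\ {in qi_group rel r &, injective (sval rel)}.

Variable (R : numDomainType) (Ptrans : S -> S -> R).

Definition CUS (a : S) : {set S} := [set b | (0 < Ptrans a b)%R].

(* Update set signature of the QI-group of r: the multiset (as a list)
   of CUS(s) for the sensitive values s of the records of the group. *)
Definition USS rel r : seq {set S} :=
  [seq CUS (sval rel r') | r' <- enum (qi_group rel r)].

Definition legal_update_instance (S' : {set S}) (U : seq {set S}) : Prop :=
  [/\ #|S'| = size U,
      (forall s, s \in S' -> exists2 Uj, Uj \in U & s \in Uj)
    & (forall Uj, Uj \in U -> exists2 s, s \in S' & s \in Uj)].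

(* Releases T 0, ..., T (n-1) are m-Distinct; inT marks the records of
   the dataset T (the others being counterfeit). *)
Definition m_distinct (m n : nat) (inT : pred Rec)
    (T : nat -> release Rec S G) : Prop :=
  (forall i, i < n -> m_unique m (T i)) /\
  (forall t, inT t -> forall i j, i < j -> j < n ->
     t \in present (T i) -> t \in present (T j) ->
     (forall k, i < k -> k < j -> t \notin present (T k)) ->
     legal_update_instance (cand_set (T j) t) (USS (T i) t)).

Definition version_idx (n : nat) (T : nat -> release Rec S G) r : seq nat :=
  [seq i <- iota 0 n | r \in present (T i)].

Definition version_cands (n : nat) (T : nat -> release Rec S G) r
  : seq {set S} :=
  [seq cand_set (T i) r | i <- version_idx n T r].

End Model.

(* SUG and feasible sub-SUG.  Layers are indexed 0..I-1 (paper: 1..I). *)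
(* A (sub-)SUG is described by its node layers N : nat -> {set S}: the *)
(* node v_{j,s} is present iff s \in N j.  Edges (v_{j,s},v_{j+1,s'})   *)
(* exist exactly when P_trans(s,s') > 0 and both nodes are present.    *)
Section SUG.
Variables (S : finType) (R : numDomainType) (Ptrans : S -> S -> R).

Definition edge (s s' : S) : bool := (0 < Ptrans s s')%R.

Definition sug_layers (C : seq {set S}) : nat -> {set S} :=
  fun j => nth set0 C j.

Definition has_out (N : nat -> {set S}) (j : nat) (s : S) : bool :=
  [exists s' in N j.+1, edge s s'].

Definition has_in (N : nat -> {set S}) (j : nat) (s : S) : bool :=
  [exists s0 in N j.-1, edge s0 s].

Definition deletable (I : nat) (N : nat -> {set S}) (j : nat) (s : S) : bool :=
  (1 < I) &&
  [|| (j == 0) && ~~ has_out N j s,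
      (j == I.-1) && ~~ has_in N j s
    | (0 < j < I.-1) && (~~ has_in N j s || ~~ has_out N j s)].

Definition del_step (I : nat) (N N' : nat -> {set S}) : Prop :=
  exists j s, [/\ j < I, s \in N j, deletable I N j s &
    forall k, N' k = if k == j then N j :\ s else N k].

Inductive del_reach (I : nat) (N : nat -> {set S}) : (nat -> {set S}) -> Prop :=
| del_refl : del_reach I N N
| del_trans N1 N2 : del_reach I N N1 -> del_step I N1 N2 -> del_reach I N N2.

Definition feasible_sub_sug (C : seq {set S}) (N : nat -> {set S}) : Prop :=
  del_reach (size C) (sug_layers C) N /\
  (forall j s, j < size C -> s \in N j -> ~~ deletable (size C) N j s).

End SUG.

(* Main.v *)
Require Import Defs.
From HB Require Import structures.
From mathcomp Require Import all_boot all_order all_algebra.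

Lemma idx_facts (Rec S : finType) (G : eqType) (n : nat)
  (T : nat -> release Rec S G) (t : Rec) :
  let idx := version_idx n T t in
  (forall j, j < size idx -> nth 0 idx j < n /\ t \in present (T (nth 0 idx j))) /\
  (forall j, j.+1 < size idx -> nth 0 idx j < nth 0 idx j.+1 /\
     forall k, nth 0 idx j < k -> k < nth 0 idx j.+1 -> t \notin present (T k)).
Proof.
move=> idx.
have Hmem : forall j, j < size idx -> nth 0 idx j < n /\ t \in present (T (nth 0 idx j)).
  move=> j Hj; have := mem_nth 0 Hj.
  by rewrite /idx /version_idx mem_filter mem_iota add0n => /andP[-> /andP[_ ->]].
have Hs : sorted ltn idx by apply: sorted_filter; [exact: ltn_trans | exact: iota_ltn_sorted].
have Hmono := sorted_ltn_nth ltn_trans 0 Hs.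
split=> // j Hj.
have Hj' : j < size idx by apply: ltnW.
have Hlt : nth 0 idx j < nth 0 idx j.+1 by apply: Hmono; rewrite ?inE.
split=> // k H1 H2; apply/negP=> Hk.
have Hkn : k < n.
  by apply: (ltn_trans H2); case: (Hmem _ Hj).
have Hki : k \in idx by rewrite /idx /version_idx mem_filter mem_iota add0n Hkn Hk.
have Hp : index k idx < size idx by rewrite index_mem.
have Ek := nth_index 0 Hki.
case: (ltngtP (index k idx) j) => Hc.
- have := Hmono _ _ Hp Hj' Hc; rewrite Ek => H.
  by move: (ltn_trans H H1); rewrite ltnn.
- case: (ltngtP (index k idx) j.+1) => Hc2.
  + by rewrite ltnS leqNgt Hc in Hc2.
  + have := Hmono _ _ Hj Hp Hc2; rewrite Ek => H.
    by move: (ltn_trans H H2); rewrite ltnn.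
  + by move: H2; rewrite -Hc2 Ek ltnn.
- by move: H1; rewrite -Hc Ek ltnn.
Qed.

Lemma not_del (S : finType) (R : numDomainType) (Ptrans : S -> S -> R)
  I (N : nat -> {set S}) j s : j < I ->
  (j < I.-1 -> has_out Ptrans N j s) -> (0 < j -> has_in Ptrans N j s) ->
  ~~ deletable Ptrans I N j s.
Proof.
move=> HjI Ho Hi; rewrite /deletable; apply/negP => /andP[HI].
have HI1 : 0 < I.-1 by move: HI; case: (I) => [|[|I0]].
case/or3P => /andP[].
- by move/eqP=> Ej; rewrite Ho // Ej.
- move/eqP=> Ej; rewrite Hi // Ej //.
- case/andP=> H0 H1; by rewrite Ho // Hi.
Qed.

Lemma reach_fixed {S : finType} {R : numDomainType} {Ptrans : S -> S -> R}
  {I} (N0 N : nat -> {set S}) : (forall j s, j < I -> s \in N0 j -> ~~ deletable Ptrans I N0 j s) ->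
  del_reach Ptrans I N0 N -> N = N0.
Proof.
move=> Hnd; elim=> // N1 N2 _ IH [j [s [Hj Hs Hd _]]].
by subst N1; move: (Hnd _ _ Hj Hs); rewrite Hd.
Qed.

Theorem lemma3 (Rec S : finType) (G : eqType) (R : numDomainType)
  (Ptrans : S -> S -> R) (Ptrans_ge0 : forall a b, (0 <= Ptrans a b)%R)
  (m n : nat) (inT : pred Rec) (T : nat -> release Rec S G)
  (Hdist : m_distinct Ptrans m n inT T)
  (t : Rec) (Ht : inT t) (N : nat -> {set S}) :
  feasible_sub_sug Ptrans (version_cands n T t) N ->
  forall i, i < size (version_cands n T t) -> m <= #|N i|.
Proof.
case: Hdist => Huniq Hleg [Hreach _].
have [Hmem Hcons] := @idx_facts _ _ _ n T t.
set idx := version_idx n T t in Hmem Hcons.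
set C := version_cands n T t in Hreach *.
have sizeC : size C = size idx by rewrite /C /version_cands size_map.
have nthC : forall j, j < size idx -> sug_layers C j = cand_set (T (nth 0 idx j)) t.
  by move=> j Hj; rewrite /sug_layers /C /version_cands (nth_map 0).
have legal : forall j, j.+1 < size idx ->
   legal_update_instance (cand_set (T (nth 0 idx j.+1)) t) (USS Ptrans (T (nth 0 idx j)) t).
  move=> j Hj; have [Hlt Hbt] := Hcons j Hj.
  have [Hn1 Hp1] := Hmem j.+1 Hj; have [_ Hp0] := Hmem j (ltnW Hj).
  exact: (Hleg t Ht _ _ Hlt Hn1 Hp0 Hp1 Hbt).
have Hnd : forall j s, j < size C -> s \in sug_layers C j ->
    ~~ deletable Ptrans (size C) (sug_layers C) j s.
  move=> j s Hj; rewrite sizeC in Hj *; rewrite nthC // => Hs.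
  apply: not_del => // [Hj1|Hj0].
  - have Hj1' : j.+1 < size idx by rewrite -ltn_predRL.
    have [_ _ H3] := legal j Hj1'.
    move/imsetP: Hs => [r' Hr' ->].
    have [s' Hs' Hin] := H3 (CUS Ptrans (Defs.sval (T (nth 0 idx j)) r'))
      (map_f _ (etrans (mem_enum _ _) Hr')).
    apply/existsP; exists s'; rewrite nthC // Hs' /=.
    by move: Hin; rewrite inE.
  - have Hj1 : (j.-1).+1 < size idx by rewrite prednK.
    have [_ H2 _] := legal j.-1 Hj1.
    rewrite prednK // in H2.
    have [Uj /mapP[r' Hr' ->] Hin] := H2 s Hs.
    rewrite mem_enum in Hr'.
    apply/existsP; exists (Defs.sval (T (nth 0 idx j.-1)) r').
    rewrite nthC; last by apply: ltnW.
    rewrite (imset_f _ Hr') /=; by move: Hin; rewrite inE.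
move=> i Hi.
rewrite sizeC in Hi.
rewrite (@reach_fixed _ _ _ _ _ _ Hnd Hreach) (nthC i Hi).
have [Hin Hp] := Hmem i Hi.
have [Hc Hinj] := Huniq _ Hin t Hp.
rewrite /cand_set (card_in_imset Hinj).
exact: Hc.
Qed.
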